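(* Let $n,d\ge 1$, let $X\in\mathbb{R}^{d\times n}$ have columns $x_1,\dots,x_n\in\mathbb{R}^d$, let $y=(y_1,\dots,y_n)^T\in\{-1,+1\}^n$ contain at least one entry equal to $+1$ and at least one entry equal to $-1$, and set $Z=X\,\mathrm{diag}(y)$. Let $q>0$, $C>0$, and let $e\in\mathbb{R}^n$ have all entries positive with $\|e\|_\infty=1$. Let $\kappa=\frac{q+1}{q}q^{\frac{1}{q+1}}$ and let $\alpha^*$ be an optimal solution of the problem $$\min_{\alpha\in\mathbb{R}^n}\Big\{\|Z\alpha\|-\kappa\sum_{i=1}^n\alpha_i^{\frac{q}{q+1}}\;\Big|\;0\le\alpha\le Ce,\ \langle y,\alpha\rangle=0\Big\}.$$ Then there exists $\delta>0$ such that $\alpha^*_i\ge\delta$ for all $i=1,\dots,n$.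
   Context: This problem is (up to sign) the Lagrangian dual of the primal problem $\min\{\sum_{i=1}^n\theta_q(r_i)+C\langle e,\xi\rangle \mid Z^Tw+\beta y+\xi-r=0,\ \|w\|\le1,\ \xi\ge0\}$, where $\theta_q(t)=t^{-q}$ for $t>0$ and $+\infty$ otherwise. $\|\cdot\|$ is the Euclidean norm; inequalities between vectors are componentwise. *)

(* Defs.v *)
From HB Require Import structures.
From mathcomp Require Import all_boot all_order all_algebra.
From mathcomp Require Import all_classical all_reals all_analysis.
Set Implicit Arguments. Unset Strict Implicit. Unset Printing Implicit Defensive.
Import Order.TTheory GRing.Theory Num.Theory.
Local Open Scope ring_scope.

Definition eucl_norm (R : realType) (m : nat) (v : 'cV[R]_m) : R :=
  Num.sqrt (\sum_(i < m) v i 0 ^+ 2).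

Definition linf_norm (R : realType) (n : nat) (e : 'I_n -> R) : R :=
  \big[Num.max/0]_(i < n) `|e i|.

Definition Zmat (R : realType) (d n : nat) (X : 'M[R]_(d, n)) (y : 'I_n -> R)
  : 'M[R]_(d, n) := X *m diag_mx (\row_i y i).

Definition kappa (R : realType) (q : R) : R :=
  (q + 1) / q * powR q (1 / (q + 1)).

Definition dual_obj (R : realType) (d n : nat) (X : 'M[R]_(d, n))
  (y : 'I_n -> R) (q : R) (a : 'I_n -> R) : R :=
  eucl_norm (Zmat X y *m \col_i a i)
  - kappa q * \sum_(i < n) powR (a i) (q / (q + 1)).

Definition dual_feasible (R : realType) (n : nat) (y : 'I_n -> R) (C : R)
  (e : 'I_n -> R) (a : 'I_n -> R) : Prop :=
  (forall i, 0 <= a i /\ a i <= C * e i) /\ \sum_(i < n) y i * a i = 0.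

Definition dual_optimal (R : realType) (d n : nat) (X : 'M[R]_(d, n))
  (y : 'I_n -> R) (q C : R) (e : 'I_n -> R) (a : 'I_n -> R) : Prop :=
  dual_feasible y C e a /\
  forall b, dual_feasible y C e b -> dual_obj X y q a <= dual_obj X y q b.

(* Main.v *)
Require Import Defs.
From HB Require Import structures.
From mathcomp Require Import all_boot all_order all_algebra.
From mathcomp Require Import all_classical all_reals all_analysis.
From mathcomp Require Import ring lra.
Import Order.TTheory GRing.Theory Num.Theory.
Local Open Scope ring_scope.

Section H.
Variable R : realType.

Lemma norm_add (d : nat) (u w : 'cV[R]_d) (t : R) : 0 <= t ->
  eucl_norm (u + t *: w) <= eucl_norm u + t * (\sum_i `|w i 0| + eucl_norm w).
Proof.
move=> t0; rewrite /eucl_norm.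
set Su := \sum_(i < d) u i 0 ^+ 2; set Sw := \sum_(i < d) w i 0 ^+ 2.
set A := \sum_i `|w i 0|.
have Su0 : 0 <= Su by apply: sumr_ge0 => i _; exact: sqr_ge0.
have Sw0 : 0 <= Sw by apply: sumr_ge0 => i _; exact: sqr_ge0.
have A0 : 0 <= A by apply: sumr_ge0 => i _.
have s0 := sqrtr_ge0 Su; have sw0 := sqrtr_ge0 Sw.
have B0 : 0 <= Num.sqrt Su + t * (A + Num.sqrt Sw).
  by apply: addr_ge0 => //; apply: mulr_ge0 => //; apply: addr_ge0.
rewrite -(ger0_norm B0) -sqrtr_sqr; apply: ler_wsqrtr.
have E : \sum_(i < d) (u + t *: w) i 0 ^+ 2 =
   Su + 2 * t * (\sum_i u i 0 * w i 0) + t ^+ 2 * Sw.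
  rewrite /Su /Sw mulr_sumr mulr_sumr -!big_split /=; apply: eq_bigr => i _.
  rewrite !mxE; ring.
rewrite E.
have UW : \sum_i u i 0 * w i 0 <= Num.sqrt Su * A.
  rewrite /A mulr_sumr; apply: ler_sum => i _.
  have ui : `|u i 0| <= Num.sqrt Su.
    rewrite -sqrtr_sqr; apply: ler_wsqrtr.
    rewrite /Su (bigD1 i) //= lerDl; apply: sumr_ge0 => j _; exact: sqr_ge0.
  apply: (le_trans (ler_norm _)); rewrite normrM.
  by apply: ler_wpM2r.
have sq1 := sqr_sqrtr Su0; have sq2 := sqr_sqrtr Sw0.
move: sq1 sq2 UW s0 sw0 B0.
generalize (Num.sqrt Su) (Num.sqrt Sw).
move=> a b sq1 sq2 UW a0 b0 B0; rewrite -sq1 -sq2.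
have h1 := ler_wpM2l t0 UW.
have h2 : 0 <= t * t * (b * A) by apply: mulr_ge0 => //; apply: mulr_ge0.
have h3 : 0 <= t * t * (A * A) by apply: mulr_ge0 => //; apply: mulr_ge0.
have h4 : 0 <= t * (a * b) by apply: mulr_ge0 => //; apply: mulr_ge0.
lra.
Qed.
Lemma pow_concave (p a x : R) : 0 < p -> p <= 1 -> 0 < a -> 0 <= x -> x <= a ->
  x * (a `^ p / a) <= x `^ p.
Proof.
move=> p0 p1 a0 x0 xa.
have [->|xn0] := eqVneq x 0; first by rewrite mul0r powR_ge0.
have xp : 0 < x by rewrite lt_neqAle eq_sym xn0.
have rE : x = x / a * a by rewrite divfK // gt_eqF.
rewrite [in X in _ <= X]rE powRM; last exact: ltW; last by rewrite divr_ge0 // ltW.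
have -> : x * (a `^ p / a) = x / a * a `^ p by rewrite mulrA mulrAC.
apply: ler_wpM2r; first exact: powR_ge0.
apply: ger1_powR => //; apply/andP; split; first by rewrite divr_gt0.
by rewrite ler_pdivrMr // mul1r.
Qed.

Lemma small_t (q t1 K : R) : 0 < q -> 0 < t1 -> 0 <= K ->
  exists t, 0 < t /\ t <= t1 /\ t * K < t `^ (q / (q + 1)).
Proof.
move=> q0 t10 K0.
set c := Num.min (Num.min t1 1) (1 / (K + 1)).
have c0 : 0 < c by rewrite !lt_min t10 ltr01 /= divr_gt0 // ltr_wpDl.
have c1 : c <= 1 by rewrite /c !ge_min lexx orbT.
have ct1 : c <= t1 by rewrite /c !ge_min lexx.
have cK : c <= 1 / (K + 1) by rewrite /c ge_min lexx orbT.
exists (c `^ (q + 1)); split; first exact: powR_gt0.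
split.
  apply: le_trans ct1; apply: ge1r_powR; first by rewrite c0 c1.
  by rewrite lerDr ltW.
rewrite -powRrM (_ : (q + 1) * (q / (q + 1)) = q); last first.
  by field; rewrite gt_eqF // ltr_wpDr // ltW.
rewrite powRD; last by rewrite (gt_eqF c0) implybT.
rewrite powRr1; last exact: ltW.
have P0 : 0 < c `^ q := powR_gt0 _ c0.
rewrite -mulrA -[X in _ < X]mulr1 ltr_pM2l //.
have cK1 : c * (K + 1) <= 1.
  by rewrite -ler_pdivlMr ?ltr_wpDl // .
lra.
Qed.

Lemma sum_kron (n : nat) (F : 'I_n -> R) (k : 'I_n) :
  \sum_i F i * (i == k)%:R = F k.
Proof.
rewrite (bigD1 k) //= eqxx mulr1 big1 ?addr0 // => i /negbTE ->; by rewrite mulr0.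
Qed.

Lemma kappa_gt0 (q : R) : 0 < q -> 0 < kappa q.
Proof.
move=> q0; rewrite /kappa; apply: mulr_gt0; last exact: powR_gt0.
by apply: divr_gt0 => //; rewrite ltr_wpDr // ltW.
Qed.

Lemma key (d n : nat) (X : 'M[R]_(d, n)) (y : 'I_n -> R) (q C : R)
  (e a : 'I_n -> R) (k j : 'I_n) (s t1 M : R) :
  0 < q -> dual_optimal X y q C e a -> a k = 0 -> j != k ->
  y k + s * y j = 0 -> 0 < t1 -> 0 <= M ->
  (forall t, 0 < t -> t <= t1 ->
     t <= C * e k /\ 0 <= a j + s * t /\ a j + s * t <= C * e j) ->
  (forall t, 0 < t -> t <= t1 ->
     a j `^ (q / (q + 1)) - t * M <= (a j + s * t) `^ (q / (q + 1))) ->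
  False.
Proof.
move=> q0 [[feas sum0] opt] ak0 jk ys t10 M0 Hb Hf.
set p := q / (q + 1).
have pp : 0 < p by rewrite /p divr_gt0 // ltr_wpDr // ltW.
have p0 : p != 0 by rewrite gt_eqF.
set v : 'I_n -> R := fun i => (i == k)%:R + s * (i == j)%:R.
set w := Zmat X y *m \col_i v i.
set u := Zmat X y *m \col_i a i.
set K := \sum_i `|w i 0| + eucl_norm w.
have K0 : 0 <= K.
  apply: addr_ge0; first by apply: sumr_ge0.
  exact: sqrtr_ge0.
have kap0 := @kappa_gt0 q q0.
have [t [t0 [tt1 tK]]] := @small_t q t1 (K / kappa q + M) q0 t10
  (addr_ge0 (divr_ge0 K0 (ltW kap0)) M0).
set b : 'I_n -> R := fun i => a i + t * v i.
have vk : v k = 1 by rewrite /v eqxx eq_sym (negbTE jk) mulr0 addr0.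
have vj : v j = s by rewrite /v eqxx (negbTE jk) mulr1 add0r.
have vo : forall i, i != k -> i != j -> v i = 0.
  by move=> i /negbTE ik /negbTE ij; rewrite /v ik ij mulr0 addr0.
have [tCk [bj0 bjC]] := Hb t t0 tt1.
have fb : dual_feasible y C e b.
  split.
    move=> i; rewrite /b.
    have [->|ik] := eqVneq i k; first by rewrite ak0 vk add0r mulr1 ltW.
    have [->|ij] := eqVneq i j; first by rewrite vj mulrC.
    by rewrite vo // mulr0 addr0; exact: feas.
  rewrite /b.
  under eq_bigr do rewrite mulrDr.
  rewrite big_split /= sum0 add0r.
  under eq_bigr do rewrite mulrCA.
  rewrite -mulr_sumr /v.
  under eq_bigr do rewrite mulrDr.
  rewrite big_split /= sum_kron.
  under eq_bigr do rewrite mulrCA.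
  by rewrite -mulr_sumr sum_kron ys mulr0.
have := opt b fb.
rewrite /dual_obj.
have colE : \col_i b i = \col_i a i + t *: \col_i v i.
  by apply/matrixP => i i0; rewrite !mxE.
rewrite colE mulmxDr -scalemxAr -/u -/w.
have Nb := @norm_add d u w t (ltW t0).
rewrite -/K in Nb.
have Sf : \sum_i a i `^ p + (t `^ p - t * M) <= \sum_i b i `^ p.
  rewrite -subr_ge0 opprD addrA -sumrB (bigD1 k) //= (bigD1 j) //=.
  have -> : b k `^ p - a k `^ p = t `^ p.
    by rewrite /b ak0 vk add0r mulr1 powR0 // subr0.
  rewrite big1; last first.
    by move=> i /andP[ik ij]; rewrite /b vo // mulr0 addr0 subrr.
  have := Hf t t0 tt1; rewrite -/p /b vj (mulrC t s).
  lra.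
rewrite -/p.
have h1 := ler_wpM2l (ltW kap0) Sf.
rewrite mulrDr mulrBr in h1.
have h2 : kappa q * (t * (K / kappa q + M)) < kappa q * t `^ p.
  by rewrite ltr_pM2l.
have h3 : kappa q * (t * (K / kappa q + M)) = t * K + kappa q * (t * M).
  by field; rewrite gt_eqF.
rewrite h3 in h2.
lra.
Qed.

Lemma pos_entries (d n : nat) (X : 'M[R]_(d, n)) (y : 'I_n -> R) (q C : R)
  (e a : 'I_n -> R) :
  (forall i, y i = 1 \/ y i = -1) ->
  (exists i, y i = 1) -> (exists j, y j = -1) ->
  0 < q -> 0 < C -> (forall i, 0 < e i) ->
  dual_optimal X y q C e a -> forall k, 0 < a k.
Proof.
move=> Hy [ip yip] [im yim] q0 C0 e0 Hopt k.
have Hopt' := Hopt; move: Hopt' => [[feas sum0] _].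
have [ak0|//] : 0 = a k \/ 0 < a k.
  by have := (feas k).1; rewrite le_eqVlt => /orP[/eqP ->|->]; [left|right].
exfalso; symmetry in ak0.
set p := q / (q + 1).
have pp : 0 < p by rewrite /p divr_gt0 // ltr_wpDr // ltW.
have p1 : p <= 1 by rewrite /p ler_pdivrMr ?mul1r ?lerDl ?ltW // ltr_wpDr // ltW.
have yk2 : y k * y k = 1 by case: (Hy k) => ->; rewrite ?mulr1 ?mulrNN ?mulr1.
have Cek : 0 < C * e k by rewrite mulr_gt0.
have ysplit : forall i, y i = y k \/ y i = - y k.
  move=> i; case: (Hy i) => ->; case: (Hy k) => ->; by [left | right; rewrite ?opprK].
have [[j [Hj1 Hj2]]|Hno] := pselect (exists j, y j = - y k /\ a j < C * e j).
  have jk : j != k.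
    apply/eqP => jkE; move: Hj1; rewrite jkE => h.
    have h0 : y k = 0 by lra.
    by move: yk2; rewrite h0 mulr0 => /eqP; rewrite eq_sym oner_eq0.
  apply: (@key d n X y q C e a k j 1 (Num.min (C * e k) (C * e j - a j)) 0) => //.
  - by rewrite Hj1 mul1r subrr.
  - by rewrite lt_min Cek subr_gt0.
  - move=> t t0; rewrite le_min => /andP[t1 t2]; split => //; split.
      by rewrite mul1r; apply: addr_ge0; [exact: (feas j).1 | exact: ltW].
    by rewrite mul1r -lerBrDl.
  - move=> t t0 _; rewrite mulr0 subr0 mul1r.
    have aj0 := (feas j).1.
    apply: (ge0_ler_powR (ltW pp)); rewrite ?nnegrE //.
      by apply: addr_ge0 => //; exact: ltW.
    by rewrite lerDl; exact: ltW.
have [j0 yj0] : exists j0, y j0 = - y k.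
  case: (Hy k) => ->; [exists im; rewrite yim | exists ip; rewrite yip opprK] => //.
have aj0 : a j0 = C * e j0.
  have := (feas j0).2; rewrite le_eqVlt => /orP[/eqP //|h].
  by exfalso; apply: Hno; exists j0.
have [[j [Hj1 Hj2]]|Hno2] := pselect (exists j, y j = y k /\ 0 < a j); last first.
  have : y k * \sum_i y i * a i < 0.
    rewrite mulr_sumr (bigD1 j0) //= yj0 mulrA mulrN yk2 aj0.
    have : \sum_(i | i != j0) y k * (y i * a i) <= 0.
      apply: sumr_le0 => i _; have ai := (feas i).1.
      case: (ysplit i) => yi; rewrite yi.
        have : a i = 0.
          move: ai; rewrite le_eqVlt => /orP[/eqP <- //|h].
          by exfalso; apply: Hno2; exists i.
        by move=> ->; rewrite !mulr0.
      by rewrite mulrA mulrN yk2 mulN1r oppr_le0.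
    have : 0 < C * e j0 by rewrite mulr_gt0.
    lra.
  by rewrite sum0 mulr0 ltxx.
have jk : j != k by apply/eqP => jkE; move: Hj2; rewrite jkE ak0 ltxx.
have Mge0 : 0 <= a j `^ p / a j by rewrite divr_ge0 ?powR_ge0 // ltW.
apply: (@key d n X y q C e a k j (-1) (Num.min (C * e k) (a j)) (a j `^ p / a j)) => //.
- by rewrite Hj1 mulN1r subrr.
- by rewrite lt_min Cek Hj2.
- move=> t t0; rewrite le_min => /andP[t1 t2]; split => //; split.
    by rewrite mulN1r subr_ge0.
  rewrite mulN1r; apply: le_trans (feas j).2; rewrite lerBlDr lerDl ltW //.
- move=> t t0 t1; have t2 : t <= a j by move: t1; rewrite le_min => /andP[].
  rewrite mulN1r.
  have := @pow_concave p (a j) (a j - t) pp p1 Hj2.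
  rewrite subr_ge0 => /(_ t2); rewrite lerBlDr lerDl ltW // => /(_ isT).
  have -> : (a j - t) * (a j `^ p / a j) = a j `^ p - t * (a j `^ p / a j).
    by field; rewrite gt_eqF.
  by [].
Qed.
End H.

Theorem proposition2 (R : realType) (n d : nat) (X : 'M[R]_(d, n))
  (y : 'I_n -> R) (q C : R) (e : 'I_n -> R) (astar : 'I_n -> R) :
  (0 < n)%N -> (0 < d)%N ->
  (forall i, y i = 1 \/ y i = -1) ->
  (exists i, y i = 1) -> (exists j, y j = -1) ->
  0 < q -> 0 < C ->
  (forall i, 0 < e i) -> linf_norm e = 1 ->
  dual_optimal X y q C e astar ->
  exists delta : R, 0 < delta /\ forall i, delta <= astar i.
Proof.
move=> _ _ Hy Hp Hm q0 C0 e0 _ Hopt.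
have pos := @pos_entries R d n X y q C e astar Hy Hp Hm q0 C0 e0 Hopt.
set S := \sum_i 1 / astar i.
have S0 : 0 <= S by apply: sumr_ge0 => i _; rewrite divr_ge0 // ltW.
have S1 : 0 < 1 + S by rewrite ltr_wpDr.
exists (1 / (1 + S)); split; first by rewrite divr_gt0.
move=> i.
have Si : 1 / astar i <= 1 + S.
  rewrite /S (bigD1 i) //=.
  have : 0 <= \sum_(j | j != i) 1 / astar j.
    by apply: sumr_ge0 => j _; rewrite divr_ge0 // ltW.
  lra.
have ai := pos i.
rewrite ler_pdivrMr // -ler_pdivrMl // mulr1.
by rewrite div1r in Si.
Qed.
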